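(* There is no rigid configuration in $\mathbb{RP}^2$ consisting of fewer than 6 points (counted with multiplicity). Up to projective transformations, there are exactly two rigid configurations of 6 points (counted with multiplicity) in $\mathbb{RP}^2$: (i) three non-collinear points, each of multiplicity $2$; (ii) six distinct points, projectively equivalent to $\{(0:0:1),(1:0:1),(0:1:1),(1:1:1),(1:0:0),(0:1:0)\}$ (six points lying on four lines, each line containing three of the points and each point lying on two of the lines).
   Context: A configuration in $\mathbb{RP}^\ell$ is a finite multiset of points. Its span $\operatorname{span}(A)$ is the smallest projective subspace containing $A$; $A$ is non-degenerate if $\operatorname{span}(A)=\mathbb{RP}^\ell$. $\mathcal H(A)$ denotes the set of all projective hyperplanes of the form $\operatorname{span}(A')$ for some sub-multiset $A'\subseteq A$. For a non-degenerate configuration $A$, a point $a\in A$ is locked if it lies on $\ell$ distinct hyperplanes in $\mathcal H(A\setminus\{a\})$ (where $A\setminus\{a\}$ removes one copy of $a$), and free otherwise. A non-degenerate configuration $A$ is rigid if every point of $A$ is locked. *)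

(* Defs.v *)
From HB Require Import structures.
From mathcomp Require Import all_boot all_order all_algebra all_fingroup.
From mathcomp Require Import reals.
Set Implicit Arguments. Unset Strict Implicit. Unset Printing Implicit Defensive.
Import Order.TTheory GRing.Theory Num.Theory.
Local Open Scope ring_scope.

(* A configuration of n points (counted with multiplicity) in RP^l is a family
   A : 'I_n -> 'rV[R]_(l.+1) of nonzero homogeneous coordinate vectors; the
   multiset is the family up to reindexing, and sub-multisets correspond to
   index subsets S : {set 'I_n}. *)
Definition is_config (R : realType) (l n : nat) (A : 'I_n -> 'rV[R]_(l.+1)) :=
  forall i, A i != 0.

Definition spanS (R : realType) (l n : nat) (A : 'I_n -> 'rV[R]_(l.+1))
  (S : {set 'I_n}) : 'M[R]_(l.+1) := (\sum_(i in S) <<A i>>)%MS.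

Definition nondegenerate (R : realType) (l n : nat) (A : 'I_n -> 'rV[R]_(l.+1)) :=
  \rank (spanS A setT) = l.+1.

Definition in_hyperplanes (R : realType) (l n : nat) (A : 'I_n -> 'rV[R]_(l.+1))
  (T : {set 'I_n}) (H : 'M[R]_(l.+1)) :=
  exists2 S : {set 'I_n}, S \subset T & ((H == spanS A S)%MS /\ \rank H = l).

Definition locked (R : realType) (l n : nat) (A : 'I_n -> 'rV[R]_(l.+1)) (i : 'I_n) :=
  exists H : 'I_l -> 'M[R]_(l.+1),
    [/\ forall k, in_hyperplanes A [set~ i] (H k),
        forall k, (A i <= H k)%MS &
        forall j k, j != k -> ~~ (H j == H k)%MS].

Definition rigid (R : realType) (l n : nat) (A : 'I_n -> 'rV[R]_(l.+1)) :=
  nondegenerate A /\ forall i, locked A i.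

Definition proj_equiv (R : realType) (l n : nat) (A B : 'I_n -> 'rV[R]_(l.+1)) :=
  exists2 M : 'M[R]_(l.+1), M \in unitmx &
    exists s : 'S_n, forall i, exists2 c : R, c != 0 & B (s i) = c *: (A i *m M).

Definition pt (R : realType) (a b c : R) : 'rV[R]_3 :=
  \row_(j < 3) nth 0 [:: a; b; c] j.

Definition fam6 (R : realType) (p : seq 'rV[R]_3) : 'I_6 -> 'rV[R]_3 :=
  fun i => nth 0 p i.

Definition config_i (R : realType) : 'I_6 -> 'rV[R]_3 :=
  fam6 [:: pt 1 0 0; pt 1 0 0; pt 0 1 0; pt 0 1 0; pt 0 0 1; pt (0:R) 0 1].

Definition config_ii (R : realType) : 'I_6 -> 'rV[R]_3 :=
  fam6 [:: pt 0 0 1; pt 1 0 1; pt 0 1 1; pt 1 1 1; pt 1 0 0; pt (0:R) 1 0].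

(* Main.v *)
Require Import Defs.
From HB Require Import structures.
From mathcomp Require Import all_boot all_order all_algebra all_fingroup.
From mathcomp Require Import reals ring lra.
From Stdlib Require Import Classical_Prop.
Set Implicit Arguments. Unset Strict Implicit. Unset Printing Implicit Defensive.
Import Order.TTheory GRing.Theory Num.Theory.
Local Open Scope ring_scope.

Section Vec.
Variable R : realType.
Implicit Types p q r s x y z w : 'rV[R]_3.
Definition c0 : 'I_3 := @Ordinal 3 0 isT.
Definition c1 : 'I_3 := @Ordinal 3 1 isT.
Definition c2 : 'I_3 := @Ordinal 3 2 isT.
Definition v0 p := p ord0 c0.
Definition v1 p := p ord0 c1.
Definition v2 p := p ord0 c2.

Lemma ord3P (j : 'I_3) : j = c0 \/ j = c1 \/ j = c2.
Proof.
case: j => [[|[|[|//]]] Hj]; [left|right;left|right;right]; exact: val_inj.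
Qed.

Lemma rv3P p q : v0 p = v0 q -> v1 p = v1 q -> v2 p = v2 q -> p = q.
Proof.
move=> h0 h1 h2; apply/rowP => j.
by case: (ord3P j) => [->|[->|->]].
Qed.

Lemma sum3 (F : 'I_3 -> R) : \sum_j F j = F c0 + F c1 + F c2.
Proof.
rewrite !big_ord_recl big_ord0 addr0 addrA.
by congr (F _ + F _ + F _); apply: val_inj.
Qed.

Lemma v0Z a p : v0 (a *: p) = a * v0 p. Proof. by rewrite /v0 !mxE. Qed.
Lemma v1Z a p : v1 (a *: p) = a * v1 p. Proof. by rewrite /v1 !mxE. Qed.
Lemma v2Z a p : v2 (a *: p) = a * v2 p. Proof. by rewrite /v2 !mxE. Qed.
Lemma v0D p q : v0 (p + q) = v0 p + v0 q. Proof. by rewrite /v0 !mxE. Qed.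
Lemma v1D p q : v1 (p + q) = v1 p + v1 q. Proof. by rewrite /v1 !mxE. Qed.
Lemma v2D p q : v2 (p + q) = v2 p + v2 q. Proof. by rewrite /v2 !mxE. Qed.
Lemma v0N p : v0 (- p) = - v0 p. Proof. by rewrite /v0 !mxE. Qed.
Lemma v1N p : v1 (- p) = - v1 p. Proof. by rewrite /v1 !mxE. Qed.
Lemma v2N p : v2 (- p) = - v2 p. Proof. by rewrite /v2 !mxE. Qed.
Definition vE := (v0Z, v1Z, v2Z, v0D, v1D, v2D, v0N, v1N, v2N).

Definition cr0 p q := v1 p * v2 q - v2 p * v1 q.
Definition cr1 p q := v2 p * v0 q - v0 p * v2 q.
Definition cr2 p q := v0 p * v1 q - v1 p * v0 q.
Definition D x p q := v0 x * cr0 p q + v1 x * cr1 p q + v2 x * cr2 p q.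
Definition pr p q := [&& cr0 p q == 0, cr1 p q == 0 & cr2 p q == 0].
Definition crv p q : 'rV[R]_3 := \row_j (nth 0 [:: cr0 p q; cr1 p q; cr2 p q] j).

Lemma crvE p q : [/\ v0 (crv p q) = cr0 p q, v1 (crv p q) = cr1 p q & v2 (crv p q) = cr2 p q].
Proof. by rewrite /v0 /v1 /v2 !mxE. Qed.

Lemma nz3 p : p != 0 -> [\/ v0 p != 0, v1 p != 0 | v2 p != 0].
Proof.
move=> hp; apply/or3P; apply: contraNT hp; rewrite !negb_or !negbK.
case/and3P => /eqP a /eqP b /eqP c; apply/eqP; apply: rv3P; rewrite /v0 /v1 /v2 !mxE; [exact: a|exact: b|exact: c].
Qed.

Lemma D_perm1 x p q : D x p q = D p q x.
Proof. rewrite /D /cr0 /cr1 /cr2; ring. Qed.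
Lemma D_swap x p q : D x p q = - D x q p.
Proof. rewrite /D /cr0 /cr1 /cr2; ring. Qed.

Lemma pr_D p q w : pr p q -> D w p q = 0.
Proof. by case/and3P => /eqP a /eqP b /eqP c; rewrite /D a b c; ring. Qed.

Lemma prDP p q : (forall w, D w p q = 0) -> pr p q.
Proof.
move=> h; move: (h (crv p q)); rewrite /D; case: (crvE p q) => -> -> -> e.
have a : cr0 p q = 0 by nra.
have b : cr1 p q = 0 by nra.
have c : cr2 p q = 0 by nra.
by rewrite /pr a b c eqxx.
Qed.

Lemma pr_scale p a : pr p (a *: p).
Proof. by rewrite /pr /cr0 /cr1 /cr2; rewrite !vE; apply/and3P; split; apply/eqP; ring. Qed.

Lemma pr_ex p q : p != 0 -> pr p q -> exists a, q = a *: p.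
Proof.
move=> hp /and3P [/eqP e0 /eqP e1 /eqP e2].
move: e0 e1 e2; rewrite /cr0 /cr1 /cr2 => e0 e1 e2.
case: (nz3 hp) => h.
- exists (v0 q / v0 p); apply: rv3P; rewrite !vE.
  + by rewrite mulfVK.
  + by rewrite mulrAC; apply: (mulIf h); rewrite mulfVK //; lra.
  + by rewrite mulrAC; apply: (mulIf h); rewrite mulfVK //; lra.
- exists (v1 q / v1 p); apply: rv3P; rewrite !vE.
  + by rewrite mulrAC; apply: (mulIf h); rewrite mulfVK //; lra.
  + by rewrite mulfVK.
  + by rewrite mulrAC; apply: (mulIf h); rewrite mulfVK //; lra.
- exists (v2 q / v2 p); apply: rv3P; rewrite !vE.
  + by rewrite mulrAC; apply: (mulIf h); rewrite mulfVK //; lra.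
  + by rewrite mulrAC; apply: (mulIf h); rewrite mulfVK //; lra.
  + by rewrite mulfVK.
Qed.

Lemma prP p q : p != 0 -> reflect (exists a, q = a *: p) (pr p q).
Proof.
move=> hp; apply: (iffP idP); first exact: pr_ex.
by case=> a ->; apply: pr_scale.
Qed.

Lemma pr_sub p q : p != 0 -> pr p q = (q <= p)%MS.
Proof. by move=> hp; apply/(prP _ hp)/sub_rVP. Qed.


Definition N2 p q := cr0 p q ^+ 2 + cr1 p q ^+ 2 + cr2 p q ^+ 2.

Lemma N2_neq0 p q : ~~ pr p q -> N2 p q != 0.
Proof.
apply: contraNN; rewrite /N2 => /eqP h.
have a : cr0 p q = 0 by nra.
have b : cr1 p q = 0 by nra.
have c : cr2 p q = 0 by nra.
by rewrite /pr a b c eqxx.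
Qed.

Lemma npr_nz p q : ~~ pr p q -> p != 0 /\ q != 0.
Proof.
move=> h; split; apply: contraNN h => /eqP ->;
  by rewrite /pr /cr0 /cr1 /cr2 /v0 /v1 /v2 !mxE !(mul0r, mulr0, subr0) eqxx.
Qed.

Lemma sub2P x p q : reflect (exists a b, x = a *: p + b *: q) (x <= <<p>> + <<q>>)%MS.
Proof.
apply: (iffP idP).
- case/sub_addsmxP => [[u v] /= ->].
  have h1 : (u *m <<p>> <= p)%MS by apply: submx_trans (submxMl _ _) _; rewrite genmxE.
  have h2 : (v *m <<q>> <= q)%MS by apply: submx_trans (submxMl _ _) _; rewrite genmxE.
  case/sub_rVP: h1 => a ->; case/sub_rVP: h2 => b ->; by exists a, b.
- case=> a [b ->]; apply: addmx_sub_adds; rewrite genmxE; apply: scalemx_sub; exact: submx_refl.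
Qed.

Lemma sub2D x p q : ~~ pr p q -> (x <= <<p>> + <<q>>)%MS = (D x p q == 0).
Proof.
move=> hpq; apply/idP/idP.
- case/sub2P => a [b ->]; apply/eqP; rewrite /D /cr0 /cr1 /cr2 !vE; ring.
- move=> /eqP hD; apply/sub2P.
  have hN := N2_neq0 hpq.
  set A := cr0 p q * cr0 x q + cr1 p q * cr1 x q + cr2 p q * cr2 x q.
  set B := cr0 p q * cr0 p x + cr1 p q * cr1 p x + cr2 p q * cr2 p x.
  exists (A / N2 p q), (B / N2 p q); apply: rv3P; rewrite !vE.
  + have key : v0 x * N2 p q = A * v0 p + B * v0 q.
      rewrite -[A * _ + _]addr0 -(mul0r (cr0 p q)) -hD /A /B /N2 /D /cr0 /cr1 /cr2; ring.
    by rewrite -[LHS](mulfK hN) key; field.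
  + have key : v1 x * N2 p q = A * v1 p + B * v1 q.
      rewrite -[A * _ + _]addr0 -(mul0r (cr1 p q)) -hD /A /B /N2 /D /cr0 /cr1 /cr2; ring.
    by rewrite -[LHS](mulfK hN) key; field.
  + have key : v2 x * N2 p q = A * v2 p + B * v2 q.
      rewrite -[A * _ + _]addr0 -(mul0r (cr2 p q)) -hD /A /B /N2 /D /cr0 /cr1 /cr2; ring.
    by rewrite -[LHS](mulfK hN) key; field.
Qed.

Lemma rank_gen p : p != 0 -> \rank <<p>>%MS = 1%N.
Proof. by move=> hp; rewrite genmxE rank_rV hp. Qed.

Lemma rank2 p q : ~~ pr p q -> \rank (<<p>> + <<q>>)%MS = 2%N.
Proof.
move=> hpq; have [hp hq] := npr_nz hpq.
apply/eqP; rewrite eqn_leq; apply/andP; split.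
  case: (mxrank_adds_leqif <<p>>%MS <<q>>%MS) => le _.
  by apply: leq_trans le _; rewrite !rank_gen.
have sp : (<<p>> <= <<p>> + <<q>>)%MS := addsmxSl _ _.
case: (mxrank_leqif_sup sp) => le eqC.
rewrite ltnNge; apply/negP => h1.
have e : \rank <<p>>%MS == \rank (<<p>> + <<q>>)%MS.
  by rewrite eqn_leq le /= (leq_trans h1) // rank_gen.
rewrite eqC in e.
have : (q <= p)%MS.
  apply: submx_trans (_ : (q <= <<p>>)%MS) _; last by rewrite genmxE.
  apply: submx_trans e; have hq' : (q <= <<q>>)%MS by rewrite genmxE.
  exact: submx_trans hq' (addsmxSr _ _).
by rewrite -pr_sub // (negbTE hpq).
Qed.

Lemma D_pr12 p q r : pr p q -> D p q r = 0.
Proof. by move=> h; rewrite -D_perm1; exact: pr_D. Qed.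

Lemma rank3 p q r : D p q r != 0 -> \rank (<<p>> + <<q>> + <<r>>)%MS = 3%N.
Proof.
move=> hD.
have hpq : ~~ pr p q by apply: contraNN hD => h; rewrite D_pr12.
apply/eqP; rewrite eqn_leq rank_leq_col /=.
have sp : (<<p>> + <<q>> <= <<p>> + <<q>> + <<r>>)%MS := addsmxSl _ _.
case: (mxrank_leqif_sup sp) => le eqC.
rewrite ltnNge; apply/negP => h1.
have e : \rank (<<p>> + <<q>>)%MS == \rank (<<p>> + <<q>> + <<r>>)%MS.
  by rewrite eqn_leq le /= (leq_trans h1) // rank2.
rewrite eqC in e.
have : (r <= <<p>> + <<q>>)%MS.
  apply: submx_trans e; have hr' : (r <= <<r>>)%MS by rewrite genmxE.
  exact: submx_trans hr' (addsmxSr _ _).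
by rewrite sub2D // D_perm1 (negbTE hD).
Qed.

Lemma line3 p q x y z : ~~ pr p q -> D x p q = 0 -> D y p q = 0 -> D z p q = 0 ->
  D x y z = 0.
Proof.
move=> hpq hx hy hz; apply/eqP; apply: contraT => hD.
have := rank3 hD.
have sub : (<<x>> + <<y>> + <<z>> <= <<p>> + <<q>>)%MS.
  by rewrite !addsmx_sub !genmxE !sub2D // hx hy hz eqxx.
have := mxrankS sub; rewrite rank2 // => h e; by rewrite e in h.
Qed.

End Vec.

Section Geo.
Variable R : realType.
Implicit Types p q r s x y z w a b c d : 'rV[R]_3.

Lemma c12 x p q : D x p q = 0 -> D p x q = 0.
Proof. by rewrite /D /cr0 /cr1 /cr2 => h; rewrite -[RHS]oppr0 -h; ring. Qed.
Lemma c23 x p q : D x p q = 0 -> D x q p = 0.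
Proof. by rewrite /D /cr0 /cr1 /cr2 => h; rewrite -[RHS]oppr0 -h; ring. Qed.
Lemma c13 x p q : D x p q = 0 -> D q p x = 0.
Proof. by rewrite /D /cr0 /cr1 /cr2 => h; rewrite -[RHS]oppr0 -h; ring. Qed.
Lemma D_triv1 p q : D p p q = 0. Proof. rewrite /D /cr0 /cr1 /cr2; ring. Qed.
Lemma D_triv2 p q : D q p q = 0. Proof. rewrite /D /cr0 /cr1 /cr2; ring. Qed.
Lemma D_triv3 p q : D p q q = 0. Proof. rewrite /D /cr0 /cr1 /cr2; ring. Qed.

Lemma pr_sym p q : pr p q -> pr q p.
Proof.
case/and3P => /eqP a /eqP b /eqP c; move: a b c; rewrite /pr /cr0 /cr1 /cr2 => a b c.
apply/and3P; split; apply/eqP; [rewrite -oppr0 -a| rewrite -oppr0 -b| rewrite -oppr0 -c]; ring.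
Qed.

Lemma pr_refl p : pr p p.
Proof. by rewrite /pr /cr0 /cr1 /cr2; apply/and3P; split; apply/eqP; ring. Qed.

Lemma pr_trans p q r : q != 0 -> pr p q -> pr q r -> pr p r.
Proof.
move=> hq /pr_sym hqp hqr; case/(prP _ hq): hqp => a ->; case/(prP _ hq): hqr => b ->.
by rewrite /pr /cr0 /cr1 /cr2 !vE; apply/and3P; split; apply/eqP; ring.
Qed.

Lemma D_sub p p' q r : p != 0 -> pr p p' -> D p q r = 0 -> D p' q r = 0.
Proof.
move=> hp h hD; case/(prP _ hp): h => a ->; move: hD; rewrite /D /cr0 /cr1 /cr2 !vE => hD.
by rewrite -(mulr0 a) -hD; ring.
Qed.

Lemma same_line a b c d : ~~ pr a b -> ~~ pr c d -> D a c d = 0 -> D b c d = 0 ->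
  forall x, D x a b = 0 <-> D x c d = 0.
Proof.
move=> hab hcd ha hb x; split => hx.
- have hc : D c a b = 0 by apply: (line3 hcd) => //; apply: D_triv1.
  have hd : D d a b = 0 by apply: (line3 hcd) => //; apply: D_triv2.
  exact: (line3 hab).
- exact: (line3 hcd).
Qed.

Lemma meet_pr p q r s x y : ~~ pr p q -> ~~ pr r s -> ~ (D r p q = 0 /\ D s p q = 0) ->
  D x p q = 0 -> D y p q = 0 -> D x r s = 0 -> D y r s = 0 -> pr x y.
Proof.
move=> hpq hrs hdist h1 h2 h3 h4; apply: contraT => hxy; exfalso; apply: hdist.
have e1 := same_line hxy hpq h1 h2.
have e2 := same_line hxy hrs h3 h4.
split; apply/e1/e2; [apply: D_triv1 | apply: D_triv2].
Qed.

End Geo.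

Definition lockd (R : realType) n (A : 'I_n -> 'rV[R]_3) (i j1 k1 j2 k2 : 'I_n) :=
  [/\ [/\ j1 != i, k1 != i, j2 != i & k2 != i],
      ~~ pr (A j1) (A k1), ~~ pr (A j2) (A k2),
      D (A i) (A j1) (A k1) = 0 /\ D (A i) (A j2) (A k2) = 0 &
      ~ (D (A j2) (A j1) (A k1) = 0 /\ D (A k2) (A j1) (A k1) = 0)].

Section Link.
Variable R : realType.
Variables (n : nat) (A : 'I_n -> 'rV[R]_3).
Hypothesis hA : is_config A.

Lemma eqms_sym m1 m2 (X : 'M[R]_(m1, 3)) (Y : 'M[R]_(m2, 3)) : (X == Y)%MS = (Y == X)%MS.
Proof. by rewrite andbC. Qed.
Lemma eqms_trans m1 m2 m3 (X : 'M[R]_(m1, 3)) (Y : 'M[R]_(m2, 3)) (Z : 'M[R]_(m3, 3)) :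
  (X == Y)%MS -> (Y == Z)%MS -> (X == Z)%MS.
Proof. by move=> h1 h2; apply/eqmxP; exact: eqmx_trans (eqmxP h1) (eqmxP h2). Qed.

Lemma spanS_sub (S : {set 'I_n}) m (M : 'M[R]_(m, 3)) : (forall k, k \in S -> (A k <= M)%MS) -> (spanS A S <= M)%MS.
Proof. by move=> h; apply/sumsmx_subP => k kS; rewrite genmxE; apply: h. Qed.

Lemma sub_spanS (S : {set 'I_n}) k : k \in S -> (<<A k>> <= spanS A S)%MS.
Proof. by move=> kS; apply: (sumsmx_sup k). Qed.

Lemma hyp_ex i H : in_hyperplanes A [set~ i] H ->
  exists j k, [/\ j != i, k != i, ~~ pr (A j) (A k) & (H == <<A j>> + <<A k>>)%MS].
Proof.
case=> S sub [eqH rk].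
have rkS : \rank (spanS A S) = 2%N by rewrite -(eqmxP eqH).
have [j jS] : exists j, j \in S.
  case: (set_0Vmem S) => [S0|[j jS]]; last by exists j.
  by move: rkS; rewrite /spanS S0 big_set0 mxrank0.
case: (boolP [forall k, (k \in S) ==> (A k <= A j)%MS]) => [/forallP hall|].
  have : (spanS A S <= A j)%MS by apply: spanS_sub => k kS; exact: (implyP (hall k) kS).
  by move/mxrankS; rewrite rkS rank_rV (hA j).
rewrite negb_forall => /existsP [k]; rewrite negb_imply => /andP [kS hk].
have hjk : ~~ pr (A j) (A k) by rewrite pr_sub ?hA.
have s2 : (<<A j>> + <<A k>> <= spanS A S)%MS by rewrite addsmx_sub !sub_spanS.
have e : (<<A j>> + <<A k>> == spanS A S)%MS.
  by rewrite -(mxrank_leqif_eq s2) rank2 // rkS.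
exists j, k; split => //.
- by move: (subsetP sub j jS); rewrite !inE.
- by move: (subsetP sub k kS); rewrite !inE.
- by apply: eqms_trans eqH _; rewrite eqms_sym.
Qed.

Lemma locked_lockd i : Defs.locked A i -> exists j1 k1 j2 k2, lockd A i j1 k1 j2 k2.
Proof.
case=> H [h1 h2 h3].
have [j1 [k1 [a1 b1 c1 d1]]] := hyp_ex (h1 ord0).
have [j2 [k2 [a2 b2 c2 d2]]] := hyp_ex (h1 ord_max).
exists j1, k1, j2, k2; split => //.
- split; apply/eqP; rewrite -sub2D //.
  + by rewrite -(eqmxP d1) h2.
  + by rewrite -(eqmxP d2) h2.
- case=> e1 e2; move: (h3 ord_max ord0 isT) => /negP; apply.
  have s : (<<A j2>> + <<A k2>> <= <<A j1>> + <<A k1>>)%MS.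
    by rewrite addsmx_sub !genmxE !sub2D // e1 e2 eqxx.
  have e : (<<A j2>> + <<A k2>> == <<A j1>> + <<A k1>>)%MS.
    by rewrite -(mxrank_leqif_eq s) !rank2.
  apply: eqms_trans d2 _; apply: eqms_trans e _; by rewrite eqms_sym.
Qed.

Lemma spanS2 j k : (spanS A [set j; k] == <<A j>> + <<A k>>)%MS.
Proof.
apply/andP; split.
- apply: spanS_sub => x; rewrite !inE => /orP [/eqP->|/eqP->].
  + by apply: submx_trans (addsmxSl _ _); rewrite genmxE.
  + by apply: submx_trans (addsmxSr _ _); rewrite genmxE.
- by rewrite addsmx_sub !sub_spanS // !inE eqxx ?orbT.
Qed.

Lemma lockd_locked i j1 k1 j2 k2 : lockd A i j1 k1 j2 k2 -> Defs.locked A i.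
Proof.
case=> [[a1 b1 a2 b2] c1 c2 [d1 d2] e].
pose H (k : 'I_2) := if k == ord0 then (<<A j1>> + <<A k1>>)%MS else (<<A j2>> + <<A k2>>)%MS.
have neq : ~~ (<<A j1>> + <<A k1>> == <<A j2>> + <<A k2>>)%MS.
  apply/negP => /eqmxP E; apply: e.
  have : (<<A j2>> + <<A k2>> <= <<A j1>> + <<A k1>>)%MS by rewrite E.
  rewrite addsmx_sub !genmxE !sub2D // => /andP [/eqP -> /eqP ->]; done.
exists H; split.
- move=> k; rewrite /H; case: ifP => _.
  + exists [set j1; k1]; first by apply/subsetP => x; rewrite !inE => /orP [/eqP->|/eqP->].
    by split; [rewrite eqms_sym spanS2 | rewrite rank2].
  + exists [set j2; k2]; first by apply/subsetP => x; rewrite !inE => /orP [/eqP->|/eqP->].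
    by split; [rewrite eqms_sym spanS2 | rewrite rank2].
- move=> k; rewrite /H; case: ifP => _; rewrite sub2D //; exact/eqP.
- move=> j k; rewrite /H.
  have o2 (x : 'I_2) : (x == ord0) || (x == ord_max).
    by case: x => [[|[|//]] Hx]; [rewrite orTb | rewrite orbT].
  case/orP: (o2 j) => /eqP ->; case/orP: (o2 k) => /eqP -> //= _.
  by rewrite eqms_sym.
Qed.

Lemma nondeg_ex : Defs.nondegenerate A -> exists i j k, D (A i) (A j) (A k) != 0.
Proof.
rewrite /Defs.nondegenerate => rk.
case: (boolP [exists i, exists j, exists k, D (A i) (A j) (A k) != 0]).
  by case/existsP => i /existsP [j /existsP [k h]]; exists i, j, k.
rewrite negb_exists => /forallP h0.
have h (i j k : 'I_n) : D (A i) (A j) (A k) = 0.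
  by move: (h0 i); rewrite negb_exists => /forallP /(_ j); rewrite negb_exists => /forallP /(_ k) /negbNE /eqP.
have [i0 _] : exists i0 : 'I_n, i0 \in [set: 'I_n].
  case: (set_0Vmem [set: 'I_n]) => [S0|[j jS]]; last by exists j.
  by move: rk; rewrite S0 /spanS big_set0 mxrank0.
case: (boolP [forall k, (A k <= A i0)%MS]) => [/forallP hall|].
  have : (spanS A setT <= A i0)%MS by apply: spanS_sub => k _; exact: hall.
  by move/mxrankS; rewrite rk rank_rV (hA i0).
rewrite negb_forall => /existsP [k hk].
have h0k : ~~ pr (A i0) (A k) by rewrite pr_sub ?hA.
have : (spanS A setT <= <<A i0>> + <<A k>>)%MS.
  by apply: spanS_sub => m _; rewrite sub2D // h eqxx.
by move/mxrankS; rewrite rk rank2.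
Qed.

Lemma ex_nondeg i j k : D (A i) (A j) (A k) != 0 -> Defs.nondegenerate A.
Proof.
move=> hD; rewrite /Defs.nondegenerate; apply/eqP; rewrite eqn_leq rank_leq_col /=.
have s : (<<A i>> + <<A j>> + <<A k>> <= spanS A setT)%MS.
  by rewrite !addsmx_sub !sub_spanS ?inE.
by have := mxrankS s; rewrite rank3.
Qed.

End Link.

Ltac cp h := first [exact h | exact (c12 h) | exact (c23 h) | exact (c13 h)
  | exact (c12 (c23 h)) | exact (c23 (c12 h))].
Ltac ctriv := first [apply: D_triv1 | apply: D_triv2 | apply: D_triv3].

Section Comb.
Variable R : realType.
Variables (n : nat) (A : 'I_n -> 'rV[R]_3).
Hypothesis hA : is_config A.
Local Notation P i j := (pr (A i) (A j)).
Local Notation L i j k := (D (A i) (A j) (A k) = 0).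

Lemma Ps i j : P i j -> P j i. Proof. exact: pr_sym. Qed.
Lemma nPs i j : ~~ P i j -> ~~ P j i. Proof. by apply: contraNN; apply: Ps. Qed.
Lemma Pt i j k : P i j -> P j k -> P i k. Proof. exact: pr_trans (hA j). Qed.
Lemma Lsub i i' j k : P i i' -> L i j k -> L i' j k. Proof. exact: D_sub (hA i). Qed.
Lemma Lpr i j k : P i j -> L i j k. Proof. exact: D_pr12. Qed.
Lemma nP_neq i j : ~~ P i j -> i != j.
Proof. by apply: contraNN => /eqP ->; apply: pr_refl. Qed.
Lemma nPclass a b a' b' : ~~ P a b -> P a a' -> P b b' -> ~~ P a' b'.
Proof.
move=> hab haa hbb; apply/negP => h; move/negP: hab; apply.
by apply: Pt haa (Pt h (Ps hbb)).
Qed.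
Lemma Lne_nP i j k : D (A i) (A j) (A k) != 0 -> ~~ P i j /\ ~~ P j k /\ ~~ P i k.
Proof.
move=> h; split; [|split]; apply/negP => hp; move/eqP: h; apply.
- exact: Lpr.
- by rewrite D_perm1; apply: Lpr.
- by apply: c23; apply: Lpr.
Qed.

Lemma sameI a b c d : ~~ P a b -> ~~ P c d -> L a c d -> L b c d ->
  forall x, L x a b <-> L x c d.
Proof. by move=> h1 h2 h3 h4 x; apply: same_line h1 h2 h3 h4 (A x). Qed.

Lemma lk_swap1 i j1 k1 j2 k2 : lockd A i j1 k1 j2 k2 -> lockd A i k1 j1 j2 k2.
Proof.
case=> [[a b c d] e f [g h] k]; split => //; first by apply: nPs.
  by split => //; cp g.
by case=> x y; apply: k; split; cp x || cp y.
Qed.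
Lemma lk_swap2 i j1 k1 j2 k2 : lockd A i j1 k1 j2 k2 -> lockd A i j1 k1 k2 j2.
Proof.
case=> [[a b c d] e f [g h] k]; split => //; first by apply: nPs.
  by split => //; cp h.
by case=> x y; apply: k; split.
Qed.
Lemma lk_swapL i j1 k1 j2 k2 : lockd A i j1 k1 j2 k2 -> lockd A i j2 k2 j1 k1.
Proof.
case=> [[a b c d] e f [g h] k]; split => //.
case=> x y; apply: k.
have E := sameI e f x y.
by split; apply/E; ctriv.
Qed.

Definition sing i := forall j, j != i -> ~~ P i j.

Lemma notin_L1 i j1 k1 j2 k2 : lockd A i j1 k1 j2 k2 -> ~~ P i j2 -> ~ L j2 j1 k1.
Proof.
move=> lk hij2 h; have [[a b c d] e f [g g'] k] := lk.
have E1 := sameI hij2 e g h.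
have E2 : forall x, L x i j2 <-> L x j2 k2 by apply: sameI => //; ctriv.
apply: k; split => //; apply/E1/E2; ctriv.
Qed.

Lemma lock_nP i j1 k1 j2 k2 : sing i -> lockd A i j1 k1 j2 k2 -> ~~ P j1 j2.
Proof.
move=> si lk; have [[a b c d] e f [g g'] k] := lk.
apply/negP => hp.
have hij1 : ~~ P i j1 by apply: si.
have E1 : forall x, L x i j1 <-> L x j1 k1 by apply: sameI => //; ctriv.
have E2 : forall x, L x i j1 <-> L x j2 k2 by apply: sameI => //; apply: Lpr.
apply: k; split; apply/E1/E2; ctriv.
Qed.

Lemma lock_five i j1 k1 j2 k2 : sing i -> lockd A i j1 k1 j2 k2 ->
  [/\ [/\ ~~ P i j1, ~~ P i k1, ~~ P i j2 & ~~ P i k2],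
      [/\ ~~ P j1 k1, ~~ P j1 j2 & ~~ P j1 k2],
      [/\ ~~ P k1 j2 & ~~ P k1 k2] & ~~ P j2 k2].
Proof.
move=> si lk; have [[a b c d] e f _ _] := lk.
split; [split; exact: si| split => // |split|] => //.
- exact: lock_nP lk.
- exact: lock_nP (lk_swap2 lk).
- exact: lock_nP (lk_swap1 lk).
- exact: lock_nP (lk_swap2 (lk_swap1 lk)).
Qed.

Lemma five_off j1 k1 x y : sing j1 -> x != j1 -> ~~ P x y -> L j1 x y -> ~~ P j1 k1 ->
  L x j1 k1 -> L y j1 k1.
Proof.
move=> sj hx hxy hj hjk hxL.
have hxj : ~~ P x j1 by apply: nPs; apply: sj.
have E1 : forall t, L t x j1 <-> L t j1 k1 by apply: sameI => //; ctriv.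
have E2 : forall t, L t x j1 <-> L t x y by apply: sameI => //; ctriv.
by apply/E1/E2; ctriv.
Qed.

Lemma five_line i j1 k1 j2 k2 x y : sing i -> sing j1 -> lockd A i j1 k1 j2 k2 ->
  (forall t, (P t i \/ P t j1 \/ P t k1 \/ P t j2 \/ P t k2)) ->
  x != j1 -> y != j1 -> ~~ P x y -> L j1 x y -> ~ (L x j1 k1 /\ L y j1 k1) -> False.
Proof.
move=> si sj lk cov hx hy hxy hj hnot.
have [[a b c d] e f [g g'] k] := lk.
have nx : ~ L x j1 k1.
  by move=> h; apply: hnot; split => //; apply: (five_off sj hx hxy hj e h).
have ny : ~ L y j1 k1.
  move=> h; apply: hnot; split => //.
  by apply: (five_off sj hy (nPs hxy)) => //; cp hj.
have cls t : t != j1 -> ~ L t j1 k1 -> P t j2 \/ P t k2.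
  move=> ht hn; case: (cov t) => [h|[h|[h|[h|h]]]].
  - by exfalso; apply: hn; apply: (Lsub (Ps h)).
  - by exfalso; move/negP: (sj t ht); apply; apply: Ps.
  - by exfalso; apply: hn; apply: (Lsub (Ps h)); ctriv.
  - by left.
  - by right.
have hL : L j1 j2 k2.
  case: (cls x hx nx) => px; case: (cls y hy ny) => py.
  - by exfalso; move/negP: hxy; apply; apply: Pt px (Ps py).
  - have h1 : L j2 j1 y by apply: (Lsub px); cp hj.
    have h2 : L k2 j1 j2 by apply: (Lsub py); cp h1.
    cp h2.
  - have h1 : L k2 j1 y by apply: (Lsub px); cp hj.
    have h2 : L j2 j1 k2 by apply: (Lsub py); cp h1.
    cp h2.
  - by exfalso; move/negP: hxy; apply; apply: Pt px (Ps py).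
apply: (notin_L1 (lk_swapL lk)) hL.
exact: si.
Qed.

Lemma five i j1 k1 j2 k2 : sing i -> sing j1 -> lockd A i j1 k1 j2 k2 ->
  (exists x1 y1 x2 y2, lockd A j1 x1 y1 x2 y2) ->
  (forall t, (P t i \/ P t j1 \/ P t k1 \/ P t j2 \/ P t k2)) -> False.
Proof.
move=> si sj lk [x1 [y1 [x2 [y2 lj]]]] cov.
have [[a b c d] e f [g g'] k] := lj.
have [_ e1 _ _ _] := lk.
case: (classic (L x1 j1 k1 /\ L y1 j1 k1)) => h1; last first.
  by apply: (five_line si sj lk cov a b e g h1).
case: (classic (L x2 j1 k1 /\ L y2 j1 k1)) => h2; last first.
  by apply: (five_line si sj lk cov c d f g' h2).
case: h1 => h1 h1'; case: h2 => h2 h2'.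
have E := sameI e e1 h1 h1'.
by apply: k; split; apply/E.
Qed.

End Comb.

Ltac neqt := first [assumption | rewrite eq_sym; assumption].

Definition quad (R : realType) n (A : 'I_n -> 'rV[R]_3) (q0 q1 q2 q3 q4 q5 : 'I_n) :=
 [/\ uniq [:: q0; q1; q2; q3; q4; q5],
     D (A q0) (A q1) (A q4) = 0 /\ D (A q0) (A q2) (A q5) = 0,
     D (A q2) (A q3) (A q4) = 0 /\ D (A q1) (A q3) (A q5) = 0,
     D (A q4) (A q5) (A q0) != 0 /\ D (A q3) (A q5) (A q0) != 0 &
     D (A q4) (A q3) (A q0) != 0 /\ D (A q4) (A q5) (A q3) != 0].

Section Six.
Variable R : realType.
Variables (n : nat) (A : 'I_n -> 'rV[R]_3).
Hypothesis hA : is_config A.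
Local Notation P i j := (pr (A i) (A j)).
Local Notation L i j k := (D (A i) (A j) (A k) = 0).

Variables i j1 k1 j2 k2 z : 'I_n.
Hypothesis sg : forall t, sing A t.
Hypothesis cov : forall t, t = i \/ t = j1 \/ t = k1 \/ t = j2 \/ t = k2 \/ t = z.
Hypothesis un : uniq [:: i; j1; k1; j2; k2; z].
Hypothesis lk : lockd A i j1 k1 j2 k2.
Hypothesis lkall : forall t, exists x1 y1 x2 y2, lockd A t x1 y1 x2 y2.

Lemma nPd x y : x != y -> ~~ P x y.
Proof. by move=> h; apply: sg; rewrite eq_sym. Qed.

Lemma neqs : [/\ [/\ i != j1, i != k1, i != j2, i != k2 & i != z],
  [/\ j1 != k1, j1 != j2, j1 != k2 & j1 != z], [/\ k1 != j2, k1 != k2 & k1 != z],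
  j2 != k2 /\ j2 != z & k2 != z].
Proof.
move: un; rewrite /= !inE !negb_or.

move=> /and5P [/and5P [? ? ? ? ?] /and4P [? ? ? ?] /and3P [? ? ?] /andP [? ?] /andP [? _]].
by split => //; split.
Qed.

Lemma no4 : ~ L z j1 k1.
Proof.
move=> hz.
have [[a b c d] e f [g g'] k] := lk.
have [[ij1 ik1 ij2 ik2 iz] [j1k1 j1j2 j1k2 j1z] [k1j2 k1k2 k1z] [j2k2 j2z] k2z] := neqs.
have inL1 u : u != j2 -> u != k2 -> L u j1 k1.
  move=> h1 h2; case: (cov u) => [e'|[e'|[e'|[e'|[e'|e']]]]]; subst u;
    first [exact g | ctriv | by rewrite eqxx in h1 | by rewrite eqxx in h2 | exact hz].
have lnk u v : u != j2 -> v != j2 -> ~~ P u v -> L j2 u v -> L k2 u v.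
  move=> hu hv huv hj.
  case: (eqVneq u k2) => [->|hu2]; first ctriv.
  case: (eqVneq v k2) => [->|hv2]; first ctriv.
  exfalso; apply: (notin_L1 lk (nPd ij2)).
  have E := sameI huv e (inL1 u hu hu2) (inL1 v hv hv2).
  by apply/E.
have [u1 [v1 [u2 [v2 [[a1 b1 a2 b2] e1 f1 [g1 g2] k1']]]]] := lkall j2.
have E1 := sameI f e1 g1 (lnk _ _ a1 b1 e1 g1).
have E2 := sameI f f1 g2 (lnk _ _ a2 b2 f1 g2).
apply: k1'; split; apply/E1/E2; ctriv.
Qed.

End Six.

Section Six2.
Variable R : realType.
Variables (n : nat) (A : 'I_n -> 'rV[R]_3).
Hypothesis hA : is_config A.
Local Notation P i j := (pr (A i) (A j)).
Local Notation L i j k := (D (A i) (A j) (A k) = 0).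

Variables i j1 k1 j2 k2 z : 'I_n.
Hypothesis sg : forall t, sing A t.
Hypothesis cov : forall t, t = i \/ t = j1 \/ t = k1 \/ t = j2 \/ t = k2 \/ t = z.
Hypothesis un : uniq [:: i; j1; k1; j2; k2; z].
Hypothesis lk : lockd A i j1 k1 j2 k2.
Hypothesis lkall : forall t, exists x1 y1 x2 y2, lockd A t x1 y1 x2 y2.

Let NE := neqs un.
Let n1 : ~ L z j1 k1 := no4 sg cov un lk lkall.
Lemma eq_sym_neq (x y : 'I_n) : x != y -> y != x. Proof. by rewrite eq_sym. Qed.
Lemma n2 : ~ L z j2 k2.
Proof.
have [[ij1 ik1 ij2 ik2 iz] [j1k1 j1j2 j1k2 j1z] [k1j2 k1k2 k1z] [j2k2 j2z] k2z] := NE.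
apply: (no4 sg (i:=i) (j2:=j1) (k2 := k1)) => //.
- by move=> t; case: (cov t) => [?|[?|[?|[?|[?|?]]]]]; tauto.
- rewrite /= !inE !negb_or; do !(apply/andP; split); try done; neqt.
- exact: lk_swapL.
Qed.

Lemma z_line x y : x != z -> y != z -> ~~ P x y -> L z x y ->
  exists a b, (a = j1 \/ a = k1) /\ (b = j2 \/ b = k2) /\ L z a b /\ L a x y /\ L b x y.
Proof.
move=> hx hy hxy hz.
have [[a b c d] e f [g g'] k] := lk.
have b1 : L x j1 k1 -> L y j1 k1 -> False.
  move=> h1 h2; apply: n1.
  have E := sameI hxy e h1 h2 z.
  idtac.
  exact: (proj1 E hz).
have b2 : L x j2 k2 -> L y j2 k2 -> False.
  by move=> h1 h2; apply: n2; exact: (proj1 (sameI hxy f h1 h2 z) hz).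
case: (cov x) => [ex|[ex|[ex|[ex|[ex|ex]]]]]; subst x;
 case: (cov y) => [ey|[ey|[ey|[ey|[ey|ey]]]]]; subst y;
 first [ by rewrite eqxx in hy
       | by rewrite eqxx in hx
       | by move: hxy; rewrite pr_refl
       | by exfalso; apply: b1; first [exact g | ctriv]
       | by exfalso; apply: b2; first [exact g' | ctriv]
       | solve [ exists j1, j2; split; [by auto|split; [by auto|split; [cp hz|split; ctriv]]]
               | exists j1, k2; split; [by auto|split; [by auto|split; [cp hz|split; ctriv]]]
               | exists k1, j2; split; [by auto|split; [by auto|split; [cp hz|split; ctriv]]]
               | exists k1, k2; split; [by auto|split; [by auto|split; [cp hz|split; ctriv]]] ] ].
Qed.

Lemma six_final : exists u w, ((u = j2 /\ w = k2) \/ (u = k2 /\ w = j2)) /\ L z k1 u /\ L z j1 w.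
Proof.
have [[ij1 ik1 ij2 ik2 iz] [j1k1 j1j2 j1k2 j1z] [k1j2 k1k2 k1z] [j2k2 j2z] k2z] := NE.
have [x1 [y1 [x2 [y2 [[a1 b1 a2 b2] e1 f1 [g1 g2] k']]]]] := lkall z.
have [p1 [q1 [hp1 [hq1 [hz1 [hp1L hq1L]]]]]] := z_line a1 b1 e1 g1.
have [p2 [q2 [hp2 [hq2 [hz2 [hp2L hq2L]]]]]] := z_line a2 b2 f1 g2.
have same t : z != t -> L t x1 y1 -> L t x2 y2 -> False.
  move=> ht h1 h2.
  have E1 := sameI (nPd sg ht) e1 g1 h1.
  have E2 := sameI (nPd sg ht) f1 g2 h2.
  apply: k'; split.
  - by apply: (proj1 (E1 x2)); apply: (proj2 (E2 x2)); ctriv.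
  - by apply: (proj1 (E1 y2)); apply: (proj2 (E2 y2)); ctriv.
have pne : p1 != p2.
  apply/eqP => ep; subst p2; apply: (same p1) => //.
  by case: hp1 => ->; rewrite eq_sym.
have qne : q1 != q2.
  apply/eqP => eq; subst q2; apply: (same q1) => //.
  by case: hq1 => ->; rewrite eq_sym.
case: hp1 => ?; case: hp2 => ?; case: hq1 => ?; case: hq2 => ?; subst p1 p2 q1 q2;
 first [ by rewrite eqxx in pne | by rewrite eqxx in qne
       | solve [exists j2, k2; split; [by auto | split; assumption]
               |exists k2, j2; split; [by auto | split; assumption]] ].
Qed.

Lemma six_quad : exists u w, quad A i j1 u z k1 w.
Proof.
have [[ij1 ik1 ij2 ik2 iz] [j1k1 j1j2 j1k2 j1z] [k1j2 k1k2 k1z] [j2k2 j2z] k2z] := NE.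
have [[a b c d] e f [g g'] k] := lk.
have [u [w [huw [hu hw]]]] := six_final.
have L1 : forall t, L t i k1 <-> L t j1 k1.
  exact: sameI (nPd sg ik1) e g (D_triv2 _ _).
have nw : ~ L w j1 k1.
  case: huw => [[_ ->]|[_ ->]].
  - exact: (notin_L1 (lk_swap2 lk) (nPd sg ik2)).
  - exact: (notin_L1 lk (nPd sg ij2)).
have wne : [/\ w != i, w != j1, w != k1 & w != z].
  by case: huw => [[_ ->]|[_ ->]]; split; neqt.
have une : [/\ u != i, u != j1, u != k1 & u != z].
  by case: huw => [[-> _]|[-> _]]; split; neqt.
have uw : u != w by case: huw => [[-> ->]|[-> ->]]; neqt.
have [wi wj1 wk1 wz] := wne.
have [ui uj1 uk1 uz] := une.
have L2 : forall t, L t i w <-> L t j2 k2.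
  apply: sameI (nPd sg (eq_sym_neq wi)) f g' _.
  by case: huw => [[_ ->]|[_ ->]]; ctriv.
exists u, w; split.
- rewrite /= !inE !negb_or; do !(apply/andP; split); try done; neqt.
- split; first exact: g.
  by case: huw => [[-> ->]|[-> ->]]; cp g'.
- by split; [cp hu | cp hw].
- split; apply/eqP => h.
  + by apply: nw; apply/L1; cp h.
  + by apply: n2; apply/L2; cp h.
- split; apply/eqP => h.
  + by apply: n1; apply/L1; cp h.
  + have E := sameI e (nPd sg (eq_sym_neq wz)) (c12 hw) (c23 h).
    have h2 : L z z w by ctriv.
    by apply: n1; apply: (proj2 (E z)).
Qed.

End Six2.

Section Mat.
Variable R : realType.
Implicit Types p q r s x y z w k i : 'rV[R]_3.

Definition mk3 p q r : 'M[R]_3 := \matrix_(a < 3, b < 3) (nth 0 [:: p; q; r] a) ord0 b.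

Lemma mulmx3 x (M : 'M[R]_3) :
  [/\ v0 (x *m M) = v0 x * M c0 c0 + v1 x * M c1 c0 + v2 x * M c2 c0,
      v1 (x *m M) = v0 x * M c0 c1 + v1 x * M c1 c1 + v2 x * M c2 c1 &
      v2 (x *m M) = v0 x * M c0 c2 + v1 x * M c1 c2 + v2 x * M c2 c2].
Proof. by rewrite /v0 /v1 /v2 !mxE !sum3. Qed.

Lemma mk3E p q r :
  [/\ [/\ mk3 p q r c0 c0 = v0 p, mk3 p q r c0 c1 = v1 p & mk3 p q r c0 c2 = v2 p],
      [/\ mk3 p q r c1 c0 = v0 q, mk3 p q r c1 c1 = v1 q & mk3 p q r c1 c2 = v2 q] &
      [/\ mk3 p q r c2 c0 = v0 r, mk3 p q r c2 c1 = v1 r & mk3 p q r c2 c2 = v2 r]].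
Proof. by rewrite !mxE. Qed.

Lemma pt_v (a b c : R) : [/\ v0 (pt a b c) = a, v1 (pt a b c) = b & v2 (pt a b c) = c].
Proof. by rewrite /v0 /v1 /v2 !mxE. Qed.

Lemma pt_mk3 (a b c : R) p q r : pt a b c *m mk3 p q r = a *: p + b *: q + c *: r.
Proof.
case: (mulmx3 (pt a b c) (mk3 p q r)) => h0 h1 h2.
case: (mk3E p q r) => [[e00 e01 e02] [e10 e11 e12] [e20 e21 e22]].
case: (pt_v a b c) => f0 f1 f2.
apply: rv3P; rewrite ?h0 ?h1 ?h2 !vE; rewrite ?e00 ?e01 ?e02 ?e10 ?e11 ?e12 ?e20 ?e21 ?e22 f0 f1 f2 //.
Qed.

Lemma crv0 p q : crv p q ord0 c0 = cr0 p q. Proof. by rewrite !mxE. Qed.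
Lemma crv1 p q : crv p q ord0 c1 = cr1 p q. Proof. by rewrite !mxE. Qed.
Lemma crv2 p q : crv p q ord0 c2 = cr2 p q. Proof. by rewrite !mxE. Qed.
Lemma crvc p q : [/\ crv p q ord0 c0 = cr0 p q, crv p q ord0 c1 = cr1 p q & crv p q ord0 c2 = cr2 p q].
Proof. by rewrite !mxE. Qed.

Lemma mk3_unit p q r : D p q r != 0 -> mk3 p q r \in unitmx.
Proof.
move=> hD.
pose Nm : 'M[R]_3 := \matrix_(a < 3, b < 3) ((nth 0 [:: crv q r; crv r p; crv p q] b) ord0 a / D p q r).
suff h : mk3 p q r *m Nm = 1%:M by case: (mulmx1_unit h).
apply/matrixP => a b; rewrite !mxE sum3 !mxE /=.
case: (ord3P a) => [->|[->|->]]; case: (ord3P b) => [->|[->|->]] /=.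
all: rewrite ?crv0 ?crv1 ?crv2; move: hD; rewrite /D /cr0 /cr1 /cr2 /v0 /v1 /v2 => hD.
all: by field.
Qed.


Lemma cramer k w i z : D k w i *: z = D z w i *: k + D k z i *: w + D k w z *: i.
Proof. apply: rv3P; rewrite !vE /D /cr0 /cr1 /cr2; ring. Qed.

Lemma idv1 k w i z : D (D z w i *: k + D k w z *: i) z w = 0.
Proof. rewrite /D /cr0 /cr1 /cr2 !vE; ring. Qed.
Lemma idv2 k w i z : D (D k z i *: w + D k w z *: i) z k = 0.
Proof. rewrite /D /cr0 /cr1 /cr2 !vE; ring. Qed.
Lemma idlin a b k i : D (a *: k + b *: i) i k = 0.
Proof. rewrite /D /cr0 /cr1 /cr2 !vE; ring. Qed.
Lemma idlin2 a b k w i : D (a *: k + b *: i) w i = a * D k w i.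
Proof. rewrite /D /cr0 /cr1 /cr2 !vE; ring. Qed.
Lemma Dscale a b c x y z : D (a *: x) (b *: y) (c *: z) = a * b * c * D x y z.
Proof. rewrite /D /cr0 /cr1 /cr2 !vE; ring. Qed.
Lemma D0 y z : D 0 y z = 0.
Proof. by rewrite /D /v0 /v1 /v2 !mxE !mul0r !addr0. Qed.

Lemma Dnz_npr x y z : D x y z != 0 -> [/\ ~~ pr x y, ~~ pr y z & ~~ pr x z].
Proof.
move=> h; split; apply/negP => hp; move/eqP: h; apply.
- by rewrite -D_perm1; exact: pr_D.
- exact: pr_D.
- by rewrite D_perm1 D_swap (pr_D _ hp) oppr0.
Qed.

Lemma npr_sym x y : ~~ pr x y -> ~~ pr y x.
Proof. by apply: contraNN; apply: pr_sym. Qed.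

Lemma scale_ex p q : p != 0 -> q != 0 -> pr p q -> exists2 c, c != 0 & q = c *: p.
Proof.
move=> hp hq /(prP _ hp) [c e]; exists c => //.
by apply: contraNN hq => /eqP c0; rewrite e c0 scale0r.
Qed.

Lemma nz_of_D x y z : D x y z != 0 -> x != 0.
Proof. by apply: contraNN => /eqP ->; rewrite D0. Qed.

End Mat.

Lemma perm_of_list (s : seq 'I_6) : uniq s -> size s = 6%N ->
  exists sg : 'S_6, forall k : 'I_6, sg k = nth ord0 s k.
Proof.
move=> u hs.
have inj : injective (fun k : 'I_6 => nth ord0 s k).
  move=> x y /eqP; rewrite nth_uniq ?hs //; move/eqP; apply: val_inj.
by exists (perm inj) => k; rewrite permE.
Qed.

Section Eq.
Variable R : realType.
Variable A : 'I_6 -> 'rV[R]_3.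
Hypothesis hA : is_config A.

Lemma inv_ex (c : R) (v : 'rV[R]_3) : c != 0 -> exists2 d : R, d != 0 & v = d *: (c *: v).
Proof. by move=> hc; exists c^-1; rewrite ?invr_eq0 // scalerA mulVf // scale1r. Qed.

Lemma trip_equiv a a' b b' c c' : uniq [:: a; a'; b; b'; c; c'] ->
  pr (A a) (A a') -> pr (A b) (A b') -> pr (A c) (A c') -> D (A a) (A b) (A c) != 0 ->
  proj_equiv (config_i R) A.
Proof.
move=> u pa pb pc hD.
have [sg hsg] := perm_of_list u erefl.
have [ca hca ea] := scale_ex (hA a) (hA a') pa.
have [cb hcb eb] := scale_ex (hA b) (hA b') pb.
have [cc hcc ec] := scale_ex (hA c) (hA c') pc.
exists (mk3 (A a) (A b) (A c)); first exact: mk3_unit.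
exists sg => k; rewrite hsg.
have h1 : (1 : R) != 0 := oner_neq0 _.
case: k => [[|[|[|[|[|[|//]]]]]] Hk]; rewrite /config_i /fam6 /= pt_mk3 !scale1r !scale0r ?addr0 ?add0r.
- by exists 1; rewrite ?scale1r.
- by exists ca.
- by exists 1; rewrite ?scale1r.
- by exists cb.
- by exists 1; rewrite ?scale1r.
- by exists cc.
Qed.

Lemma quad_equiv q0 q1 q2 q3 q4 q5 : quad A q0 q1 q2 q3 q4 q5 -> proj_equiv (config_ii R) A.
Proof.
case=> u [l014 l025] [l234 l135] [hD hal] [hbe hga].
have [sg hsg] := perm_of_list u erefl.
move: l014 l025 l234 l135 hD hal hbe hga.
set k := A q4; set w := A q5; set i := A q0; set z := A q3 => l014 l025 l234 l135 hD hal hbe hga.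
set Dl := D k w i in hD; set al := D z w i in hal; set be := D k z i in hbe; set ga := D k w z in hga.
exists (mk3 (al *: k) (be *: w) (ga *: i)).
  by apply: mk3_unit; rewrite Dscale !mulf_neq0.
exists sg => t; rewrite hsg.
have [nik [nwi nki]] : [/\ ~~ pr i k, ~~ pr w i & ~~ pr k i].
  by case: (Dnz_npr hD) => a1 a2 a3; split => //; apply: npr_sym.
have [nzw _ _] := Dnz_npr hal.
have [nkz _ _] := Dnz_npr hbe.
case: t => [[|[|[|[|[|[|//]]]]]] Ht]; rewrite /config_ii /fam6 /= pt_mk3 ?scale1r ?scale0r ?addr0 ?add0r.
- exact: inv_ex.
- set v := al *: k + ga *: i.
  have hv : v != 0.
    apply: (@nz_of_D _ v w i); rewrite idlin2; exact: mulf_neq0.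
  have p : pr v (A q1).
    apply: (meet_pr nik nzw).
    + case=> h1 _; move/eqP: hbe; apply; rewrite /be -D_perm1 -D_perm1; exact: h1.
    + exact: idlin.
    + exact: c12 l014.
    + exact: idv1.
    + done.
  have [c hc e] := scale_ex hv (hA q1) p.
  by exists c.
- set v := be *: w + ga *: i.
  have hv : v != 0.
    apply: (@nz_of_D _ v k i); rewrite idlin2.
    have -> : D w k i = - Dl by rewrite /Dl D_perm1 D_swap.
    by rewrite mulrN oppr_eq0; apply: mulf_neq0.
  have p : pr v (A q2).
    apply: (meet_pr nwi (npr_sym nkz)).
    + by case=> h1 _; move/eqP: hal; apply.
    + exact: c23 (idlin _ _ _ _).
    + exact: c23 (c12 l025).
    + exact: idv2.
    + done.
  have [c hc e] := scale_ex hv (hA q2) p.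
  by exists c.
- exists Dl^-1; first by rewrite invr_eq0.
  have := cramer k w i z; rewrite -/al -/be -/ga -/Dl => <-.
  by rewrite scalerA mulVf // scale1r.
- exact: inv_ex.
- exact: inv_ex.
Qed.

End Eq.

Ltac neqP := first [neqt |
  match goal with
  | H : is_true (~~ pr (?A ?x) (?A ?y)) |- is_true (?x != ?y) => exact: nP_neq H
  | H : is_true (~~ pr (?A ?y) (?A ?x)) |- is_true (?x != ?y) => exact: nP_neq (nPs H)
  end].
Ltac uniqt := rewrite /= !inE !negb_or; do !(apply/andP; split); try done; neqP.

Lemma uniq_leq n (s : seq 'I_n) : uniq s -> (size s <= n)%N.
Proof.
move=> u; rewrite -(card_uniqP u); apply: leq_trans (max_card _) _; by rewrite card_ord.
Qed.

Lemma cover_all n (s : seq 'I_n) : (n <= size s)%N -> uniq s -> forall x, x \in s.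
Proof.
move=> hn u x.
have sub : {subset s <= enum 'I_n} by move=> y _; rewrite mem_enum.
have hs : (size (enum 'I_n) <= size s)%N by rewrite size_enum_ord.
have [_ e] := uniq_min_size u sub hs.
by rewrite e mem_enum.
Qed.

Lemma mem6 (T : eqType) (x a b c d e f : T) : x \in [:: a; b; c; d; e; f] ->
  x = a \/ x = b \/ x = c \/ x = d \/ x = e \/ x = f.
Proof.
rewrite !inE => /orP [/eqP->|/orP [/eqP->|/orP [/eqP->|/orP [/eqP->|/orP [/eqP->|/eqP->]]]]];
 auto 10.
Qed.

Section Struct.
Variable R : realType.
Variables (n : nat) (A : 'I_n -> 'rV[R]_3).
Hypothesis hA : is_config A.
Local Notation P i j := (pr (A i) (A j)).

Lemma structure : (n <= 6)%N -> Defs.rigid A ->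
  (exists a a' b b' c c', [/\ uniq [:: a; a'; b; b'; c; c'], P a a', P b b', P c c' &
      D (A a) (A b) (A c) != 0]) \/
  (exists q0 q1 q2 q3 q4 q5, quad A q0 q1 q2 q3 q4 q5).
Proof.
move=> hn [nd lockall].
have lkall t : exists x1 y1 x2 y2, lockd A t x1 y1 x2 y2 := locked_lockd hA (lockall t).
have [a [b [c habc]]] := nondeg_ex hA nd.
case: (boolP [forall i, exists j, (j != i) && P i j]) => [/forallP hall|].
  left.
  have [a' /andP [ha pa]] := existsP (hall a).
  have [b' /andP [hb pb]] := existsP (hall b).
  have [c' /andP [hc pc]] := existsP (hall c).
  have [nab [nbc nac]] := Lne_nP habc.
  have r x : P x x := pr_refl _.
  have f1 := nPclass hA nab (r a) pb. have f2 := nPclass hA nab pa (r b).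
  have f3 := nPclass hA nab pa pb.
  have f4 := nPclass hA nbc (r b) pc. have f5 := nPclass hA nbc pb (r c).
  have f6 := nPclass hA nbc pb pc.
  have f7 := nPclass hA nac (r a) pc. have f8 := nPclass hA nac pa (r c).
  have f9 := nPclass hA nac pa pc.
  exists a, a', b, b', c, c'; split => //.
  uniqt.
rewrite negb_forall => /existsP [i hi].
have si : sing A i.
  move=> j hj; apply/negP => hp; move/negP: hi; apply; apply/existsP; exists j.
  by rewrite hj hp.
have [j1 [k1 [j2 [k2 lk]]]] := lkall i.
have [[ij1 ik1 ij2 ik2] [j1k1 j1j2 j1k2] [k1j2 k1k2] j2k2] := lock_five si lk.
case: (boolP [exists z, [&& ~~ P z i, ~~ P z j1, ~~ P z k1, ~~ P z j2 & ~~ P z k2]]).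
  case/existsP => z /and5P [zi zj1 zk1 zj2 zk2].
  right.
  have un : uniq [:: i; j1; k1; j2; k2; z] by uniqt.
  have cov t : t = i \/ t = j1 \/ t = k1 \/ t = j2 \/ t = k2 \/ t = z.
    by apply: mem6; exact: (@cover_all n [:: i; j1; k1; j2; k2; z] hn un t).
  have sg t : sing A t.
    move=> u hut.
    case: (cov t) => [?|[?|[?|[?|[?|?]]]]]; case: (cov u) => [?|[?|[?|[?|[?|?]]]]]; subst t u;
      first [by rewrite eqxx in hut | assumption | apply: nPs; assumption].
  have [u [w hq]] := six_quad sg cov un lk lkall.
  by exists i, j1, u, z, k1, w.
rewrite negb_exists => /forallP hnz.
have cov5 t : P t i \/ P t j1 \/ P t k1 \/ P t j2 \/ P t k2.
  move: (hnz t); case: (P t i); first by left.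
  case: (P t j1); first by right; left.
  case: (P t k1); first by right; right; left.
  case: (P t j2); first by do 3 right; left.
  case: (P t k2); first by do 4 right.
  done.
exfalso.
case: (boolP [exists y, (y != j1) && P j1 y]).
  case/existsP => y /andP [hy pj1y].
  have sk1 : sing A k1.
    move=> y' hy'; apply/negP => pk1y'.
    have r x : P x x := pr_refl _.
    have g1 := nPclass hA ij1 (r i) pj1y.
    have g2 := nPclass hA j1k1 pj1y (r k1).
    have g3 := nPclass hA j1j2 pj1y (r j2).
    have g4 := nPclass hA j1k2 pj1y (r k2).
    have g5 := nPclass hA ik1 (r i) pk1y'.
    have g6 := nPclass hA j1k1 (r j1) pk1y'.
    have g7 := nPclass hA k1j2 pk1y' (r j2).
    have g8 := nPclass hA k1k2 pk1y' (r k2).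
    have g9 := nPclass hA j1k1 pj1y pk1y'.
    have u7 : uniq [:: i; j1; k1; j2; k2; y; y'] by uniqt.
    by have := leq_trans (uniq_leq u7) hn.
  apply: (five hA si sk1 (lk_swap1 lk) (lkall k1)) => t.
  by case: (cov5 t) => [h|[h|[h|[h|h]]]]; auto 10.
rewrite negb_exists => /forallP hj1.
have sj1 : sing A j1.
  move=> y hy; apply/negP => p; move: (hj1 y); by rewrite hy p.
exact: (five hA si sj1 lk (lkall j1) cov5).
Qed.

End Struct.

Section Tr.
Variable R : realType.
Implicit Types x y z w : 'rV[R]_3.

Definition dM (M : 'M[R]_3) := D (row c0 M) (row c1 M) (row c2 M).

Lemma DM x y z (M : 'M[R]_3) : D (x *m M) (y *m M) (z *m M) = D x y z * dM M.
Proof.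
rewrite /dM /D /cr0 /cr1 /cr2.
case: (mulmx3 x M) => -> -> ->; case: (mulmx3 y M) => -> -> ->; case: (mulmx3 z M) => -> -> ->.
rewrite /v0 /v1 /v2 !mxE; ring.
Qed.

Lemma dM_mul (M N : 'M[R]_3) : dM (M *m N) = dM M * dM N.
Proof. by rewrite /dM !row_mul DM. Qed.

Lemma dM1 : dM 1%:M = 1.
Proof. rewrite /dM /D /cr0 /cr1 /cr2 /v0 /v1 /v2 !mxE /=. ring. Qed.


Lemma dM_unit (M : 'M[R]_3) : M \in unitmx -> dM M != 0.
Proof.
move=> hM; have := dM_mul M (invmx M); rewrite mulmxV // dM1 => h.
apply/eqP => e; move: h; rewrite e mul0r => h; lra.
Qed.

Lemma tr_D (M : 'M[R]_3) x y z a b c :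
  D (a *: (x *m M)) (b *: (y *m M)) (c *: (z *m M)) = a * b * c * (D x y z * dM M).
Proof. by rewrite Dscale DM. Qed.

Lemma tr_npr (M : 'M[R]_3) x y a b : M \in unitmx -> a != 0 -> b != 0 -> ~~ pr x y ->
  ~~ pr (a *: (x *m M)) (b *: (y *m M)).
Proof.
move=> hM ha hb; apply: contraNN => h; apply: prDP => w.
have := pr_D (w *m M) h.
rewrite -[w *m M]scale1r Dscale DM mul1r.
move/eqP; rewrite !mulf_eq0 (negbTE ha) (negbTE hb) (negbTE (dM_unit hM)) /=.
by rewrite orbF => /eqP.
Qed.

End Tr.

Lemma rigid_transport (R : realType) n (C A : 'I_n -> 'rV[R]_3) : is_config A ->
  proj_equiv C A -> (exists a b c, D (C a) (C b) (C c) != 0) ->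
  (forall i, exists j1 k1 j2 k2, lockd C i j1 k1 j2 k2) -> Defs.rigid A.
Proof.
move=> hA [M hM [s hs]] [a [b [c habc]]] hlk.
have hd := dM_unit hM.
have key x y w : D (A (s x)) (A (s y)) (A (s w)) = 0 <-> D (C x) (C y) (C w) = 0.
  have [cx hx ->] := hs x; have [cy hy ->] := hs y; have [cw hw ->] := hs w.
  rewrite tr_D; split => [/eqP|->]; last by rewrite !mul0r mulr0.
  rewrite !mulf_eq0 (negbTE hx) (negbTE hy) (negbTE hw) (negbTE hd) /= orbF.
  by move/eqP.
have keyN x y : ~~ pr (C x) (C y) -> ~~ pr (A (s x)) (A (s y)).
  have [cx hx ->] := hs x; have [cy hy ->] := hs y.
  exact: tr_npr.
split.
  apply: (@ex_nondeg _ _ _ (s a) (s b) (s c)).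
  by apply/eqP => /key; apply/eqP.
move=> t.
have -> : t = s (s^-1 t)%g by rewrite permKV.
have [j1 [k1 [j2 [k2 [[e1 e2 e3 e4] f1 f2 [g1 g2] h]]]]] := hlk (s^-1 t)%g.
apply: (@lockd_locked _ _ _ _ (s j1) (s k1) (s j2) (s k2)).
split.
- by rewrite !(inj_eq perm_inj).
- exact: keyN.
- exact: keyN.
- by split; apply/key.
- by case=> /key x1 /key x2; apply: h.
Qed.

Notation o k := (@Ordinal 6 k isT).

Section Conc.
Variable R : realType.

Lemma ptv0 (a b c : R) : v0 (pt a b c) = a. Proof. by rewrite /v0 mxE. Qed.
Lemma ptv1 (a b c : R) : v1 (pt a b c) = b. Proof. by rewrite /v1 mxE. Qed.
Lemma ptv2 (a b c : R) : v2 (pt a b c) = c. Proof. by rewrite /v2 mxE. Qed.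

Ltac conc := rewrite /lockd /config_i /config_ii /fam6 /= /pr /D /cr0 /cr1 /cr2 ?ptv0 ?ptv1 ?ptv2.
Ltac arith := first [ by [] | (apply/negP => /and3P [/eqP ? /eqP ? /eqP ?]; lra) | lra
                    | (case=> ? ?; lra) | (apply/eqP => ?; lra) ].
Ltac lockt := conc; split; [split; by [] | arith | arith | split; arith | arith].

Lemma cfg_i_nd : exists a b c, D (config_i R a) (config_i R b) (config_i R c) != 0.
Proof. exists (o 0), (o 2), (o 4); conc; arith. Qed.

Lemma cfg_i_lock i : exists j1 k1 j2 k2, lockd (config_i R) i j1 k1 j2 k2.
Proof.
case: i => [[|[|[|[|[|[|//]]]]]] Hi].
- exists (o 1), (o 2), (o 1), (o 4); lockt.
- exists (o 0), (o 2), (o 0), (o 4); lockt.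
- exists (o 3), (o 0), (o 3), (o 4); lockt.
- exists (o 2), (o 0), (o 2), (o 4); lockt.
- exists (o 5), (o 0), (o 5), (o 2); lockt.
- exists (o 4), (o 0), (o 4), (o 2); lockt.
Qed.

Lemma cfg_ii_nd : exists a b c, D (config_ii R a) (config_ii R b) (config_ii R c) != 0.
Proof. exists (o 0), (o 4), (o 5); conc; arith. Qed.

Lemma cfg_ii_lock i : exists j1 k1 j2 k2, lockd (config_ii R) i j1 k1 j2 k2.
Proof.
case: i => [[|[|[|[|[|[|//]]]]]] Hi].
- exists (o 1), (o 4), (o 2), (o 5); lockt.
- exists (o 0), (o 4), (o 3), (o 5); lockt.
- exists (o 0), (o 5), (o 3), (o 4); lockt.
- exists (o 2), (o 4), (o 1), (o 5); lockt.
- exists (o 0), (o 1), (o 2), (o 3); lockt.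
- exists (o 0), (o 2), (o 1), (o 3); lockt.
Qed.

Lemma cfg_ii_npr a b : a != b -> ~~ pr (config_ii R a) (config_ii R b).
Proof.
case: a => [[|[|[|[|[|[|//]]]]]] Ha]; case: b => [[|[|[|[|[|[|//]]]]]] Hb] //= _; conc; arith.
Qed.

Lemma pr_scale2 (a b : R) (v : 'rV[R]_3) : pr (a *: v) (b *: v).
Proof. rewrite /pr /cr0 /cr1 /cr2 !vE; apply/and3P; split; apply/eqP; ring. Qed.

End Conc.

Unset Implicit Arguments.

Theorem proposition5p2 (R : realType) :
  (forall (n : nat) (A : 'I_n -> 'rV[R]_3),
      is_config A -> rigid A -> (6 <= n)%N) /\
  (forall A : 'I_6 -> 'rV[R]_3,
      is_config A -> (rigid A <-> (proj_equiv (config_i R) A \/ proj_equiv (config_ii R) A))) /\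
  ~ proj_equiv (config_i R) (config_ii R).
Proof.
split; [|split].
- move=> n A hA hr.
  case: (leqP 6 n) => // hn.
  have hn6 : (n <= 6)%N by apply: ltnW.
  have U : forall s : seq 'I_n, uniq s -> size s = 6%N -> False.
    by move=> s u hs; have := uniq_leq u; rewrite hs => h; rewrite ltnNge h in hn.
  case: (structure hA hn6 hr) => [[a [a' [b [b' [c [c' [u _ _ _ _]]]]]]]|[q0 [q1 [q2 [q3 [q4 [q5 [u _ _ _ _]]]]]]]];
    by exfalso; apply: U u _.
- move=> A hA; split.
  + move=> hr.
    case: (structure hA (leqnn 6) hr) => [[a [a' [b [b' [c [c' [u pa pb pc hD]]]]]]]|[q0 [q1 [q2 [q3 [q4 [q5 hq]]]]]]].
    * by left; exact: (trip_equiv hA u pa pb pc hD).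
    * by right; exact: (quad_equiv hA hq).
  + case=> h.
    * by apply: (rigid_transport hA h (cfg_i_nd R) (@cfg_i_lock R)).
    * by apply: (rigid_transport hA h (cfg_ii_nd R) (@cfg_ii_lock R)).
- case=> M hM [s hs].
  have [c0 hc0 e0] := hs (o 0).
  have [c1 hc1 e1] := hs (o 1).
  have eq01 : config_i R (o 0) = config_i R (o 1) by [].
  have hp : pr (config_ii R (s (o 0))) (config_ii R (s (o 1))).
    by rewrite e0 e1 -eq01 pr_scale2.
  have hne : s (o 0) != s (o 1) by rewrite (inj_eq perm_inj).
  by move: (cfg_ii_npr R hne); rewrite hp.
Qed.
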